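(* Let $S\subseteq[4]$ be nonempty, let $d_1\in\{1,2\}$, and let real numbers $x_{k,j}$ with $0\le x_{k,j}\le\frac12$ be given for $1\le k\le d_1$ and $j\in S$. For $j\in S$ define $$f_j=\frac{\prod_{k=1}^{d_1}(1-x_{k,j})}{\sum_{w\in S}\prod_{k=1}^{d_1}(1-x_{k,w})}.$$ Then for every $i,j\in S$ it holds that $\frac14\le f_i/f_j\le 4$ and $f_i\ge\frac1{13}$. *)

(* Defs.v *)
From mathcomp Require Import all_boot all_order all_algebra.
From mathcomp Require Import reals.
Set Implicit Arguments. Unset Strict Implicit. Unset Printing Implicit Defensive.
Import Order.TTheory GRing.Theory Num.Theory.
Local Open Scope ring_scope.

(* [4] = {1,2,3,4} is represented by 'I_4 = {0,1,2,3}; k in 1..d1 by 'I_d1. *)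
Definition fval (R : realType) (d1 : nat) (S : {set 'I_4})
  (x : 'I_d1 -> 'I_4 -> R) (j : 'I_4) : R :=
  (\prod_(k < d1) (1 - x k j)) / (\sum_(w in S) \prod_(k < d1) (1 - x k w)).

(* Main.v *)
Require Import Defs.
From mathcomp Require Import all_boot all_order all_algebra.
From mathcomp Require Import reals.
From mathcomp Require Import lra.
Import Order.TTheory GRing.Theory Num.Theory.
Local Open Scope ring_scope.

Lemma pbound (R : realType) (S : {set 'I_4}) (d1 : nat)
  (x : 'I_d1 -> 'I_4 -> R) w :
  (d1 = 1%N \/ d1 = 2%N) ->
  (forall (k : 'I_d1) (j : 'I_4), j \in S -> 0 <= x k j /\ x k j <= 1 / 2) ->
  w \in S -> 1/4 <= \prod_(k < d1) (1 - x k w) <= 1.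
Proof.
move=> Hd Hx wS; case: Hd => ?; subst d1.
  rewrite big_ord1.
  have [h1 h2] := Hx ord0 w wS.
  move: h1 h2; set a := x _ w => h1 h2.
  apply/andP; split; lra.
rewrite big_ord_recr big_ord1 /=.
have [h1 h2] := Hx ord_max w wS.
have [h3 h4] := Hx (widen_ord (leqnSn 1) ord0) w wS.
move: h1 h2 h3 h4; set a := x ord_max w; set b := x (widen_ord _ _) w => h1 h2 h3 h4.
apply/andP; split; nra.
Qed.

Theorem proposition16 (R : realType) (S : {set 'I_4}) (d1 : nat)
  (x : 'I_d1 -> 'I_4 -> R) :
  S != set0 -> (d1 = 1%N \/ d1 = 2%N) ->
  (forall (k : 'I_d1) (j : 'I_4), j \in S -> 0 <= x k j /\ x k j <= 1 / 2) ->
  forall i j : 'I_4, i \in S -> j \in S ->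
    1 / 4 <= fval S x i / fval S x j /\ fval S x i / fval S x j <= 4 /\
    1 / 13 <= fval S x i.
Proof.
move=> _ Hd Hx i j iS jS.
rewrite /fval.
set p := fun w => \prod_(k < d1) (1 - x k w).
have pb : forall w, w \in S -> 1/4 <= p w <= 1.
  by move=> w wS; rewrite /p; exact: (pbound _ _ _ _ _ Hd Hx wS).
have /andP[pi1 pi2] := pb i iS.
have /andP[pj1 pj2] := pb j jS.
rewrite (bigD1 i iS) /=.
set r := \sum_(w in S | w != i) _.
have r0 : 0 <= r by apply: sumr_ge0 => w /andP[wS _]; have /andP[h _] := pb w wS; apply: le_trans h; lra.
have r3 : r <= 3.
  apply: (@le_trans _ _ (\sum_(w in S | w != i) (1:R))).
    by apply: ler_sum => w /andP[wS _]; have /andP[_ h] := pb w wS.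
  rewrite sumr_const.
  have : (#|[pred w in S | w != i]| <= 3)%N.
    have h1 := max_card (mem S); rewrite card_ord in h1.
    have := cardD1 i (mem S); rewrite iS /= => h2.
    have -> : #|[pred w in S | w != i]| = #|[predD1 S & i]|.
      by apply: eq_card => w; rewrite !inE andbC.
    move: h1; rewrite h2 add1n; done.
  move=> hc; rewrite -[3]/(3%:R) ler_nat; exact: hc.
set s := p i + r.
have s0 : 0 < s by rewrite /s; lra.
have pi0 : 0 < p i by lra.
have pj0 : 0 < p j by lra.
have -> : p i / s / (p j / s) = p i / p j.
  by rewrite invf_div mulrA divfK // gt_eqF.
split; [|split].
- by rewrite ler_pdivlMr // ; lra.
- by rewrite ler_pdivrMr //; lra.
- by rewrite ler_pdivlMr // -/(p i); rewrite /s; lra.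
Qed.
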